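(* Let $\mathcal{A}$ be a pOC with state set $Q$ whose underlying chain $\mathcal{X}$ is strongly connected, with trend $t$, and let $v\in\mathbb{R}^Q$ be any potential. Fix an initial configuration $r(c)$. For runs $w$ of $\mathcal{M}_\mathcal{A}$ starting in $r(c)$, let $p^{(i)}(w)$ and $c^{(i)}(w)$ be the control state and counter value of $w(i)$. Define $$m^{(i)}=\begin{cases}c^{(i)}+v_{p^{(i)}}-i t & \text{if } c^{(j)}\ge1 \text{ for all } 0\le j<i,\\ m^{(i-1)} & \text{otherwise.}\end{cases}$$ Then $m^{(0)},m^{(1)},\dots$ is a martingale.
   Context: A pOC is $\mathcal{A}=(Q,\delta^{=0},\delta^{>0},P^{=0},P^{>0})$ with the following components. - $\delta^{>0}\subseteq Q\times\{-1,0,1\}\times Q$ are the positive rules and $\delta^{=0}\subseteq Q\times\{0,1\}\times Q$ are the zero rules. Every state has both kinds of outgoing rule. - $P^{>0}$ and $P^{=0}$ are positive probability distributions over the outgoing rules of each state. $\mathcal{M}_\mathcal{A}$ is the Markov chain on configurations $p(i)$ with the following transitions: - $p(0)\to q(c)$ with probability $P^{=0}(p,c,q)$; - for $i\ge1$, $p(i)\to q(i+c)$ with probability $P^{>0}(p,c,q)$. $\mathcal{X}$ is the finite Markov chain on $Q$ with transition matrix $A_{pq}=\sum_cP^{>0}(p,c,q)$. $\alpha$ is its invariant distribution, $s_p=\sum_{(p,c,q)\in\delta^{>0}}P^{>0}(p,c,q)c$, and the trend is $t=\alpha s$. A potential is a vector $v$ with $s+Av=v+\mathbf{1}t$. *)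

(* Defs.v *)
From HB Require Import structures.
From mathcomp Require Import all_boot all_order all_algebra.
From mathcomp Require Import reals.
Set Implicit Arguments. Unset Strict Implicit. Unset Printing Implicit Defensive.
Import Order.TTheory GRing.Theory Num.Theory.
Local Open Scope ring_scope.

Section POC.
Variables (R : realType) (Q : finType).

(* A pOC is given by its two families of rule probabilities:
   Pz p c q = P^{=0}(p,c,q) and Pp p c q = P^{>0}(p,c,q), with c : int.
   The rule sets are the supports: delta^{=0} = {(p,c,q) | Pz p c q > 0},
   delta^{>0} = {(p,c,q) | Pp p c q > 0}. *)
Definition is_pOC (Pz Pp : Q -> int -> Q -> R) : Prop :=
  [/\ (forall p c q, 0 <= Pz p c q) /\ (forall p c q, 0 <= Pp p c q),
      (forall p c q, Pz p c q != 0 -> (c == 0) || (c == 1)),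
      (forall p c q, Pp p c q != 0 -> (c == -1) || (c == 0) || (c == 1)),
      (forall p, \sum_(q : Q) \sum_(c <- [:: 0; 1]) Pz p c q = 1)
    & (forall p, \sum_(q : Q) \sum_(c <- [:: -1; 0; 1]) Pp p c q = 1)].

Definition Amat (Pp : Q -> int -> Q -> R) (p q : Q) : R :=
  \sum_(c <- [:: -1; 0; 1]) Pp p c q.

Definition svec (Pp : Q -> int -> Q -> R) (p : Q) : R :=
  \sum_(q : Q) \sum_(c <- [:: -1; 0; 1]) Pp p c q * c%:~R.

Definition strongly_connected (Pp : Q -> int -> Q -> R) : Prop :=
  forall p q : Q, connect [rel x y | 0 < Amat Pp x y] p q.

Definition invariant_dist (Pp : Q -> int -> Q -> R) (alpha : Q -> R) : Prop :=
  [/\ (forall p, 0 <= alpha p),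
      \sum_(p : Q) alpha p = 1
    & (forall q, \sum_(p : Q) alpha p * Amat Pp p q = alpha q)].

Definition trend (Pp : Q -> int -> Q -> R) (alpha : Q -> R) : R :=
  \sum_(p : Q) alpha p * svec Pp p.

Definition potential (Pp : Q -> int -> Q -> R) (t : R) (v : Q -> R) : Prop :=
  forall p, svec Pp p + \sum_(q : Q) Amat Pp p q * v q = v p + t.

Definition trans (Pz Pp : Q -> int -> Q -> R) (x y : Q * nat) : R :=
  if x.2 is 0%N then Pz x.1 (y.2)%:Z y.1
  else Pp x.1 ((y.2)%:Z - (x.2)%:Z) y.1.

Definition prefix_prob (Pz Pp : Q -> int -> Q -> R) (w : nat -> Q * nat)
  (i : nat) : R := \prod_(j < i) trans Pz Pp (w j) (w j.+1).

Fixpoint mproc (v : Q -> R) (t : R) (w : nat -> Q * nat) (i : nat) : R :=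
  match i with
  | 0%N => (w 0%N).2%:R + v (w 0%N).1 - 0%:R * t
  | i'.+1 =>
      if [forall j : 'I_i'.+1, (0 < (w j).2)%N]
      then (w i).2%:R + v (w i).1 - i%:R * t
      else mproc v t w i'
  end.

Definition upd (w : nat -> Q * nat) (k : nat) (x : Q * nat) : nat -> Q * nat :=
  fun j => if j == k then x else w j.

End POC.

(* Main.v *)
Require Import Defs.
From HB Require Import structures.
From mathcomp Require Import all_boot all_order all_algebra.
From mathcomp Require Import reals.
From mathcomp Require Import zify ring lra.
Import Order.TTheory GRing.Theory Num.Theory.
Local Open Scope ring_scope.

Lemma sum3 (R : realType) (Q : finType) (Pp : Q -> int -> Q -> R) p q k (g : nat -> R) :
 (forall c, Pp p c q != 0 -> (c == -1) || (c == 0) || (c == 1)) ->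
 \sum_(n < k.+3) Pp p ((n : nat)%:Z - (k.+1)%:Z) q * g n
   = Pp p (-1) q * g k + Pp p 0 q * g k.+1 + Pp p 1 q * g k.+2.
Proof.
move=> H. rewrite !big_ord_recr /= big1 ?add0r.
  have e1 : (k%:Z - (k.+1)%:Z) = -1 by lia.
  have e2 : ((k.+1)%:Z - (k.+1)%:Z) = 0 by lia.
  have e3 : ((k.+2)%:Z - (k.+1)%:Z) = 1 by lia.
  by rewrite e1 e2 e3.
move=> n _.
have -> : Pp p ((n : nat)%:Z - (k.+1)%:Z) q = 0; last by rewrite mul0r.
apply/eqP; apply: contraT => /H.
have := ltn_ord n.
by move=> hn /orP[/orP[]|] /eqP; lia.
Qed.

Lemma mproc_ext (R : realType) (Q : finType) (v : Q -> R) t (w w' : nat -> Q * nat) i :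
  (forall j, (j <= i)%N -> w j = w' j) -> mproc v t w i = mproc v t w' i.
Proof.
elim: i => [|i IH] H /=.
  by rewrite H.
rewrite H // IH; last by move=> j hj; apply: H; apply: leqW.
have -> : [forall j : 'I_i.+1, (0 < (w j).2)%N] = [forall j : 'I_i.+1, (0 < (w' j).2)%N].
  by apply: eq_forallb => j; rewrite H // ltnW.
by [].
Qed.

Theorem mainTheorem10 (R : realType) (Q : finType)
  (Pz Pp : Q -> int -> Q -> R) (alpha v : Q -> R) (r : Q) (c0 : nat) :
  is_pOC Pz Pp ->
  strongly_connected Pp ->
  invariant_dist Pp alpha ->
  potential Pp (trend Pp alpha) v ->
  forall (i : nat) (w : nat -> Q * nat),
    w 0%N = (r, c0) ->
    0 < prefix_prob Pz Pp w i ->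
    \sum_(q : Q) \sum_(n < (w i).2.+2)
        trans Pz Pp (w i) (q, (n : nat)) *
        mproc v (trend Pp alpha) (upd w i.+1 (q, (n : nat))) i.+1
      = mproc v (trend Pp alpha) w i.
Proof.
move=> [[Hz0 Hp0] Hzs Hps Hz1 Hp1] _ _ Hpot i w _ _.
set t := trend Pp alpha.
set b := [forall j : 'I_i.+1, (0 < (w j).2)%N].
have Hm : forall q (n : nat), mproc v t (upd w i.+1 (q, n)) i.+1 =
    if b then n%:R + v q - (i.+1)%:R * t else mproc v t w i.
  move=> q n /=; rewrite /upd eqxx.
  have -> : [forall j : 'I_i.+1, (0 < (if (j : nat) == i.+1 then (q, n) else w j).2)%N] = b.
    by apply: eq_forallb => j; rewrite (ltn_eqF (ltn_ord j)).
  case: b => //.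
  apply: mproc_ext => j hj; rewrite /upd.
  by have -> : (j == i.+1) = false by apply: ltn_eqF.
under eq_bigr => q _ do under eq_bigr => n _ do rewrite Hm.
case Eb: b.
  have Hk : (0 < (w i).2)%N by have := forallP Eb ord_max.
  have -> : mproc v t w i = (w i).2%:R + v (w i).1 - i%:R * t.
    move: Eb Hk; rewrite /b; clear Hm b; case: i => [|i] Eb Hk //=.
    suff -> : [forall j : 'I_i.+1, (0 < (w j).2)%N] by [].
    apply/forallP => j; exact: (forallP Eb (widen_ord (leqnSn _) j)).
  move: (w i) Hk => [p k] /= Hk.
  case: k Hk => [|k] // _.
  rewrite /trans /=.
  under eq_bigr => q _ do rewrite (@sum3 _ _ Pp p q k (fun n => n%:R + v q - (i.+1)%:R * t) (fun c => Hps p c q)).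
  have Ha : \sum_q (Pp p (-1) q + Pp p 0 q + Pp p 1 q) = 1.
    by rewrite -(Hp1 p); apply: eq_bigr => q _; rewrite !big_cons big_nil addr0 addrA.
  have Hb := Hpot p.
  rewrite /svec /Amat in Hb.
  transitivity (\sum_(q : Q) \sum_(c <- [:: -1; 0; 1]) Pp p c q * c%:~R
     + \sum_(q : Q) (\sum_(c <- [:: -1; 0; 1]) Pp p c q) * v q
     + \sum_(q : Q) (Pp p (-1) q + Pp p 0 q + Pp p 1 q) * ((k.+1)%:R - (i.+1)%:R * t)).
    rewrite -!big_split; apply: eq_bigr => q _ /=; rewrite !big_cons !big_nil /=.
    rewrite !mulrS; ring.
  rewrite Hb -mulr_suml Ha mul1r.
  rewrite !mulrS /t; ring.
under eq_bigr => q _ do rewrite -mulr_suml.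
rewrite -mulr_suml.
suff -> : \sum_q \sum_(n < (w i).2.+2) trans Pz Pp (w i) (q, (n : nat)) = 1 by rewrite mul1r.
move: (w i) => [p [|k]] /=; rewrite /trans /=.
  rewrite -(Hz1 p); apply: eq_bigr => q _.
  by rewrite !big_ord_recr big_ord0 !big_cons big_nil /= add0r addr0.
rewrite -(Hp1 p); apply: eq_bigr => q _.
transitivity (\sum_(n < k.+3) Pp p ((n : nat)%:Z - (k.+1)%:Z) q * (fun _ => 1) n).
  by apply: eq_bigr => n _; rewrite mulr1.
rewrite (@sum3 _ _ Pp p q k (fun _ => 1) (fun c => Hps p c q)) /= !mulr1.
by rewrite !big_cons big_nil addr0 addrA.
Qed.
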